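(* Let $P$ be an $n\times n$ D-orthogonal matrix. Then there exist vectors $\mathbf u_1,\dots,\mathbf u_n\in\{0,1\}^n$ such that each matrix $I+\mathbf u_i\mathbf u_i^T$ is D-orthogonal, and a matrix obtained from $P$ by permuting its rows and columns is congruent modulo $2$ to the product $(I+\mathbf u_1\mathbf u_1^T)(I+\mathbf u_2\mathbf u_2^T)\cdots(I+\mathbf u_n\mathbf u_n^T)$.
   Context: For integer matrices, $A\cong B$ means $A\equiv B\pmod 2$ entrywise. An integer (dyadic) square matrix $P$ is D-orthogonal if $P^TP\cong I$. Two matrices are indistinguishable if one is obtained from the other by permuting rows and columns. *)

(* Defs.v *)
From mathcomp Require Import all_boot all_order all_algebra all_fingroup.
Set Implicit Arguments. Unset Strict Implicit. Unset Printing Implicit Defensive.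
Import GRing.Theory Num.Theory.
Local Open Scope ring_scope.

Definition mxcongr2 {m n : nat} (A B : 'M[int]_(m, n)) : Prop :=
  forall i j, (A i j = B i j %[mod 2])%Z.

Definition D_orthogonal {n : nat} (P : 'M[int]_n) : Prop :=
  mxcongr2 (P^T *m P) 1%:M.

Definition elem_mx {n : nat} (u : 'cV[int]_n) : 'M[int]_n := 1%:M + u *m u^T.

Definition mxprod {n : nat} (s : seq 'M[int]_n) : 'M[int]_n :=
  foldr (fun A B => A *m B) 1%:M s.

(* Main.v *)
Require Import Defs.
From mathcomp Require Import all_boot all_order all_algebra all_fingroup.
From mathcomp Require Import zify.
Import GRing.Theory Num.Theory.
Local Open Scope ring_scope.
Set Implicit Arguments. Unset Strict Implicit.

Local Notation F := 'Z_2.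

Lemma F_cases (a : F) : a = 0 \/ a = 1.
Proof. by case: a => [[|[|m]] Hm] //; [left|right]; apply/val_inj. Qed.

Lemma F_idem (a : F) : a * a = a.
Proof. by case: (F_cases a) => ->; rewrite ?mul0r ?mul1r. Qed.

Lemma F_dbl (a : F) : a + a = 0.
Proof. by case: (F_cases a) => ->; [rewrite addr0|apply/val_inj]. Qed.

Lemma F10 : (1 : F) != 0. Proof. by []. Qed.

Definition refl {n} (u : 'cV[F]_n) : 'M[F]_n := 1%:M + u *m u^T.
Definition prodF {n} (s : seq 'M[F]_n) : 'M[F]_n := foldr mulmx 1%:M s.

Lemma prodF_rcons n (s : seq 'M[F]_n) A : prodF (rcons s A) = prodF s *m A.
Proof. by elim: s => [|B s IH] /=; rewrite ?mul1mx ?mulmx1 // IH mulmxA. Qed.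

Lemma mx_dbl m p (A : 'M[F]_(m, p)) : A + A = 0.
Proof. by apply/matrixP => i j; rewrite !mxE F_dbl. Qed.

Lemma refl_tr n (u : 'cV[F]_n) : (refl u)^T = refl u.
Proof. by rewrite /refl linearD /= trmx1 trmx_mul trmxK. Qed.

Lemma refl_sq n (u : 'cV[F]_n) : u^T *m u = 0 -> refl u *m refl u = 1%:M.
Proof.
move=> h; rewrite /refl mulmxDl mul1mx mulmxDr mulmx1.
rewrite -[u *m u^T *m (u *m u^T)]mulmxA [u^T *m _]mulmxA h mul0mx mulmx0 addr0.
by rewrite -addrA mx_dbl addr0.
Qed.

Lemma sum_delta n (a : 'I_n) (G : 'I_n -> F) :
  \sum_i (i == a)%:R * G i = G a.
Proof.
rewrite (bigD1 a) //= eqxx mul1r big1 ?addr0 // => i /negPf ->.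
by rewrite mul0r.
Qed.

Lemma sum_delta1 n (a : 'I_n) : \sum_i ((i == a)%:R : F) = 1.
Proof.
rewrite (bigD1 a) //= eqxx big1 ?addr0 // => i /negPf ->.
by [].
Qed.

Lemma orthE n (N : 'M[F]_n) j j' :
  (N^T *m N) j j' = \sum_i N i j * N i j'.
Proof. by rewrite mxE; apply: eq_bigr => i _; rewrite mxE. Qed.

Lemma core n (M : 'M[F]_n) : M^T *m M = 1%:M -> forall k, (k <= n)%N ->
  exists us : seq 'cV[F]_n, exists N : 'M[F]_n, exists f : 'I_n -> 'I_n,
  [/\ size us = k, all (fun u => u^T *m u == 0) us,
      M = prodF (map refl us) *m N, N^T *m N = 1%:M &
      forall i j : 'I_n, (j < k)%N -> N i j = (i == f j)%:R].
Proof.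
move=> hM; elim=> [|k IH] hk.
  by exists [::], M, id; split => //; rewrite /= mul1mx.
have [us [N [f [hs hall hMN hN hf]]]] := IH (ltnW hk).
pose kk : 'I_n := Ordinal hk.
have orth j j' : \sum_i N i j * N i j' = (j == j')%:R.
  by rewrite -orthE hN mxE.
have x0 (j : 'I_n) : (j < k)%N -> N (f j) kk = 0.
  move=> hj; have := orth j kk.
  under eq_bigr => i _ do rewrite (hf i j hj).
  rewrite sum_delta => ->.
  by case: eqP => // e; move: hj; rewrite e /= ltnn.
have xx : \sum_i N i kk * N i kk = 1 by rewrite orth eqxx.
have step : forall a : 'I_n, N a kk = 0 -> (forall j : 'I_n, (j < k)%N -> a != f j) ->
  exists us' N' f', [/\ size us' = k.+1, all (fun u => u^T *m u == 0) us',
      M = prodF (map refl us') *m N', N'^T *m N' = 1%:M &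
      forall i j : 'I_n, (j < k.+1)%N -> N' i j = (i == f' j)%:R].
  move=> a xa hna.
  pose u : 'cV[F]_n := \col_i (N i kk + (i == a)%:R).
  have uu : u^T *m u = 0.
    apply/matrixP => i j; rewrite !ord1 !mxE.
    under eq_bigr => l _ do rewrite !mxE F_idem.
    idtac.
    rewrite big_split /= sum_delta1.
    have -> : \sum_i N i kk = 1 by rewrite -xx; apply: eq_bigr => i' _; rewrite F_idem.
    by apply/val_inj.
  have rr := @refl_sq _ u uu.
  exists (rcons us u), (refl u *m N), (fun j => if j == kk then a else f j).
  split.
  - by rewrite size_rcons hs.
  - by rewrite -cats1 all_cat hall /= uu eqxx.
  - by rewrite map_rcons prodF_rcons -mulmxA [refl u *m _]mulmxA rr mul1mx.
  - by rewrite trmx_mul refl_tr mulmxA -[N^T *m _ *m _]mulmxA rr mulmx1.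
  move=> i j hj.
  have E : (refl u *m N) i j = N i j + u i 0 * \sum_l u l 0 * N l j.
    rewrite /refl mulmxDl mul1mx -mulmxA !mxE big_ord1 !mxE; congr (_ + _ * _).
    by apply: eq_bigr => l _; rewrite !mxE.
  rewrite E; case: (eqVneq j kk) => [->|jk]; rewrite ?eqxx ?(negPf jk).
    have -> : \sum_l u l 0 * N l kk = 1.
      under eq_bigr => l _ do rewrite mxE mulrDl.
      rewrite big_split /= xx.
      by rewrite sum_delta xa addr0.
    by rewrite mulr1 mxE addrA F_dbl add0r.
  have hj' : (j < k)%N.
    by move: hj; rewrite ltnS leq_eqVlt => /orP [/eqP e|//]; case/eqP: jk; apply/val_inj.
  rewrite (hf i j hj').
  under eq_bigr => l _ do rewrite (hf l j hj') mulrC.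
  rewrite sum_delta /u !mxE x0 // add0r (eq_sym (f j) a) (negPf (hna j hj')) mulr0 addr0.
  by [].
case: (ltnP k.+1 n) => hk1.
  pose kk1 : 'I_n := Ordinal hk1.
  have y0 (j : 'I_n) : (j < k)%N -> N (f j) kk1 = 0.
    move=> hj; have := orth j kk1.
    under eq_bigr => i _ do rewrite (hf i j hj).
    rewrite sum_delta => ->.
    by case: eqP => // e; move: hj; rewrite e /=; lia.
  case: (boolP [exists a, (N a kk == 0) && [forall j : 'I_n, (j < k)%N ==> (a != f j)]]).
    case/existsP => a /andP [/eqP xa /forallP hna]; apply: (step a xa) => j hj.
    by move: (hna j); rewrite hj.
  rewrite negb_exists => /forallP hall'.
  exfalso.
  have : \sum_i N i kk * N i kk1 = \sum_i N i kk1 * N i kk1.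
    apply: eq_bigr => i _; rewrite F_idem.
    move: (hall' i); rewrite negb_and => /orP [hi|].
      by case: (F_cases (N i kk)) hi => -> //; rewrite mul1r.
    rewrite negb_forall => /existsP [j]; rewrite negb_imply negbK => /andP [hj /eqP ->].
    by rewrite y0 // mulr0.
  rewrite !orth eqxx; case: eqP => [e|_ /eqP]; last by rewrite eq_sym (negPf F10).
  by move: (congr1 val e) => /= /eqP; rewrite ltn_eqF.
have hn : n = k.+1 by apply/eqP; rewrite eqn_leq hk hk1.
have [a xa] : exists a, N a kk = 1.
  case: (boolP [exists a, N a kk == 1]); first by case/existsP => a /eqP; exists a.
  rewrite negb_exists => /forallP h; exfalso; move: xx.
  rewrite big1 => [/eqP|i _]; first by rewrite eq_sym (negPf F10).
  by case: (F_cases (N i kk)) (h i) => -> //; rewrite mul0r.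
have NN : N *m N^T = 1%:M by apply: mulmx1C.
have xe : forall b : 'I_n, N b kk = (b == a)%:R.
  move=> b; case: eqP => [->//|/eqP ba].
  case: (F_cases (N b kk)) => // xb; exfalso.
  have := congr1 (fun A : 'M[F]_n => A a b) NN; rewrite /= !mxE [a == b]eq_sym (negPf ba) /=.
  rewrite (bigD1 kk) //= !mxE xa xb mul1r big1 ?addr0.
    by move/eqP; rewrite (negPf F10).
  move=> j hj; rewrite !mxE.
  have hj' : (j < k)%N.
    have := ltn_ord j; rewrite {2}hn ltnS leq_eqVlt => /orP [/eqP e|//].
    by case/eqP: hj; apply/val_inj.
  rewrite (hf a j hj'); case: eqP => [e|]; last by rewrite mul0r.
  by move: xa; rewrite e x0 // => /eqP; rewrite eq_sym (negPf F10).
exists (rcons us 0), N, (fun j => if j == kk then a else f j).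
split.
- by rewrite size_rcons hs.
- by rewrite -cats1 all_cat hall /= trmx0 mul0mx eqxx.
- by rewrite map_rcons prodF_rcons /refl mul0mx addr0 mulmx1.
- by [].
move=> i j hj; case: (eqVneq j kk) => [->|jk]; rewrite ?eqxx ?xe //.
apply: hf.
by move: hj; rewrite ltnS leq_eqVlt => /orP [/eqP e|//]; case/eqP: jk; apply/val_inj.
Qed.
Lemma mod2_cases (z : int) : (z %% 2)%Z = 0 \/ (z %% 2)%Z = 1.
Proof. lia. Qed.

Lemma z2_int (z : int) : (z%:~R : 'Z_2) = ((z %% 2)%Z)%:~R.
Proof.
rewrite {1}(divz_eq z 2) rmorphD rmorphM /=.
have -> : (2%:~R : 'Z_2) = 0 by apply/val_inj.
by rewrite mulr0 add0r.
Qed.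

Lemma z2_modP (a b : int) : (a = b %[mod 2])%Z <-> (a%:~R : 'Z_2) = b%:~R.
Proof.
rewrite z2_int (z2_int b); split; first by move=> ->.
by case: (mod2_cases a) => ->; case: (mod2_cases b) => -> //; move/(congr1 val).
Qed.

Local Notation phi := (fun z : int => (z%:~R : F)).

Lemma congrP m p (A B : 'M[int]_(m, p)) :
  map_mx phi A = map_mx phi B -> (forall i j, (A i j = B i j %[mod 2])%Z).
Proof. by move=> h i j; apply/z2_modP; move/matrixP: (h) => /(_ i j); rewrite !mxE. Qed.

Lemma congrP' m p (A B : 'M[int]_(m, p)) :
  (forall i j, (A i j = B i j %[mod 2])%Z) -> map_mx phi A = map_mx phi B.
Proof. by move=> h; apply/matrixP => i j; rewrite !mxE; apply/z2_modP. Qed.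

Lemma phiM m p q (A : 'M[int]_(m, p)) (B : 'M[int]_(p, q)) :
  map_mx phi (A *m B) = map_mx phi A *m map_mx phi B.
Proof. by rewrite map_mxM. Qed.

Lemma phiT m p (A : 'M[int]_(m, p)) : map_mx phi A^T = (map_mx phi A)^T.
Proof. by apply/matrixP => i j; rewrite !mxE. Qed.

Lemma phi1 n : map_mx phi (1%:M : 'M[int]_n) = 1%:M.
Proof. by rewrite map_mx1. Qed.

Lemma phiD m p (A B : 'M[int]_(m, p)) : map_mx phi (A + B) = map_mx phi A + map_mx phi B.
Proof. by rewrite map_mxD. Qed.

Lemma phi_mxprod n (s : seq 'M[int]_n) :
  map_mx phi (mxprod s) = prodF (map (map_mx phi) s).
Proof. by elim: s => [|A s IH] /=; rewrite ?phi1 // phiM IH. Qed.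

Definition lift2 n (v : 'cV[F]_n) : 'cV[int]_n := map_mx (fun a : F => (val a)%:Z) v.

Lemma phi_lift2 n (v : 'cV[F]_n) : map_mx phi (lift2 v) = v.
Proof. by apply/matrixP => i j; rewrite !mxE -pmulrn natr_Zp. Qed.

Theorem theorem3p9 (n : nat) (P : 'M[int]_n) :
  D_orthogonal P ->
  exists u : 'I_n -> 'cV[int]_n,
    (forall i k, u i k ord0 = 0 \/ u i k ord0 = 1) /\
    (forall i, D_orthogonal (elem_mx (u i))) /\
    exists (r c : 'S_n),
      mxcongr2 (row_perm r (col_perm c P))
             (mxprod [seq elem_mx (u i) | i <- enum 'I_n]).
Proof.
move=> hP.
set Pb := map_mx phi P.
have hPb : Pb^T *m Pb = 1%:M by rewrite -phiT -phiM -(phi1 n); apply: congrP'.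
have [us [N [f [hs hall hMN hN hf]]]] := core hPb (leqnn n).
have hf' i j : N i j = (i == f j)%:R by apply: hf.
have finj : injective f.
  move=> j1 j2 e; apply/eqP; case: eqP => // /eqP ne; exfalso.
  have := orthE N j1 j2; rewrite hN !mxE (negPf ne).
  under eq_bigr => i _ do rewrite !hf'.
  rewrite e sum_delta eqxx => /eqP; by rewrite eq_sym (negPf F10).
pose s := perm finj.
have hus (i : 'I_n) : (nth 0 us i)^T *m nth 0 us i = 0.
  apply/eqP; move/allP: hall; apply; apply: mem_nth; rewrite hs.
  exact: ltn_ord.
exists (fun i => lift2 (nth 0 us i)).
split.
  move=> i k; rewrite !mxE; case: (F_cases (nth 0 us i k ord0)) => ->; [left|right]; by [].
split.
  move=> i; apply: congrP.
  rewrite /elem_mx !(phiM, phiT, phiD, phi1, phi_lift2).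
  by rewrite -/(refl _) refl_tr refl_sq.
exists 1%g, s^-1%g.
apply: congrP.
rewrite phi_mxprod -map_comp.
have -> : [seq (map_mx phi \o (fun i : 'I_n => elem_mx (lift2 (nth 0 us i)))) i | i <- enum 'I_n]
    = map refl us.
  rewrite -[in RHS](mkseq_nth 0 us) hs /mkseq -val_enum_ord -!map_comp.
  apply: eq_map => i /=.
  by rewrite /elem_mx !(phiM, phiT, phiD, phi1, phi_lift2).
have fs j' : f (s^-1%g j') = j' by have := permKV s j'; rewrite permE.
apply/matrixP => i j; rewrite !mxE perm1.
have -> : ((P i (s^-1%g j))%:~R : F) = Pb i (s^-1%g j) by rewrite mxE.
rewrite hMN mxE.
under eq_bigr => l _ do rewrite hf' fs mulrC.
by rewrite sum_delta.
Qed.
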